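(* Let $n\ge1$, let $f(x)=\sum_{i=0}^{n-1}a_ix^i$ and $g(x)=\sum_{i=0}^{n-1}b_ix^i$ be polynomials over $\mathbb{R}$, and let $\mathfrak{h}=f(\mathfrak{r})+\mathfrak{s}g(\mathfrak{r})\in\mathbb{R}[D_{2n}]$. Then the eigenvalues of the matrix $A(\mathfrak{h})A(\mathfrak{h})^T$ are $(|f(\xi^i)|\pm|g(\xi^i)|)^2$ for $i=0,1,\dots,n-1$, where $\xi=e^{2\pi\sqrt{-1}/n}$ and $|\cdot|$ is the complex absolute value. Consequently $|\mathfrak{h}|_{\rm Mat}\le\max\{|f(\xi^i)|+|g(\xi^i)| : i=0,1,\dots,n-1\}$.
   Context: $D_{2n}$ is the dihedral group of order $2n$ generated by $\mathfrak{r},\mathfrak{s}$ with $\mathfrak{r}^n=\mathfrak{s}^2=1$, $\mathfrak{s}\mathfrak{r}\mathfrak{s}=\mathfrak{r}^{-1}$. The group ring $\mathbb{R}[D_{2n}]$ is identified with $\mathbb{R}^{2n}$ via the basis of group elements (coefficient embedding). For $\mathfrak{h}\in\mathbb{R}[D_{2n}]$, $A(\mathfrak{h})$ is the $2n\times2n$ real matrix of the linear map $x\mapsto\mathfrak{h}x$ on $\mathbb{R}[D_{2n}]$ (the regular representation applied to $\mathfrak{h}$). The matrix norm is $|\mathfrak{h}|_{\rm Mat}=\sqrt{\text{largest eigenvalue of }A(\mathfrak{h})A(\mathfrak{h})^T}$. *)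

(* Defs.v *)
From HB Require Import structures.
From mathcomp Require Import all_boot all_order all_algebra.
From mathcomp Require Import classical_sets reals trigo.
From mathcomp.real_closed Require Import complex.
Set Implicit Arguments. Unset Strict Implicit. Unset Printing Implicit Defensive.
Import Order.TTheory GRing.Theory Num.Theory.
Local Open Scope ring_scope.

(* The dihedral group D_{2n}: the element (e, j) stands for s^e r^j,
   e : bool, j : 'I_n.  All 2n elements are distinct. *)
Definition Dn (n : nat) : finType := (bool * 'I_n)%type.

Lemma ord_n_gt0 n (j : 'I_n) : (0 < n)%N.
Proof. exact: leq_ltn_trans (leq0n j) (ltn_ord j). Qed.

(* Product:  s^e1 r^j1 * s^e2 r^j2 = s^(e1+e2) r^(+-j1 + j2)
   (using r^j s = s r^-j), exponent of r taken mod n. *)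
Definition dmul n (x y : Dn n) : Dn n :=
  (xorb x.1 y.1,
   Ordinal (ltn_pmod ((if y.1 then n - x.2 else x.2) + y.2)%N
                     (ord_n_gt0 x.2))).

(* The group ring R[D_{2n}], elements = coefficient functions D_{2n} -> R
   (coefficient embedding). *)
Definition grmul (R : pzRingType) n (u v : Dn n -> R) : Dn n -> R :=
  fun z => \sum_(x : Dn n) \sum_(y : Dn n) u x * v y * (dmul x y == z)%:R.

Definition gbasis (R : pzRingType) n (g : Dn n) : Dn n -> R :=
  fun z => (z == g)%:R.

(* A(h): the matrix of x |-> h x in the basis of group elements (enumerated
   via enum_val); column l holds the coordinates of h * (l-th basis elt). *)
Definition Amat (R : pzRingType) n (h : Dn n -> R) : 'M[R]_#|Dn n| :=
  \matrix_(k, l) grmul h (gbasis R (enum_val l)) (enum_val k).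

Definition mat_norm (R : realType) n (h : Dn n -> R) : R :=
  Num.sqrt (sup [set x : R | eigenvalue (Amat h *m (Amat h)^T) x]).

(* h = f(r) + s g(r) with f = sum a_i x^i, g = sum b_i x^i. *)
Definition hcoef (R : pzRingType) n (a b : 'I_n -> R) : Dn n -> R :=
  fun x => if x.1 then b x.2 else a x.2.

Definition xi (R : realType) (n : nat) : R[i] :=
  (cos (2 * pi / n%:R) +i* sin (2 * pi / n%:R))%C.

Definition peval (R : realType) n (a : 'I_n -> R) (z : R[i]) : R[i] :=
  \sum_(k < n) (a k)%:C%C * z ^+ k.

Definition absev (R : realType) n (a : 'I_n -> R) (i : nat) : R :=
  Normc.normc (peval a (xi R n ^+ i)).

(* Main.v *)
Require Import Defs.
From HB Require Import structures.
From mathcomp Require Import all_boot all_order all_algebra.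
From mathcomp Require Import classical_sets reals trigo.
From mathcomp.real_closed Require Import complex.
From mathcomp Require Import ring lra.
Import Order.TTheory GRing.Theory Num.Theory.
Local Open Scope ring_scope.

Set Implicit Arguments. Unset Strict Implicit. Unset Printing Implicit Defensive.

Lemma cisM (R : realType) (s t : R) :
  ((cos s +i* sin s) * (cos t +i* sin t))%C = (cos (s + t) +i* sin (s + t))%C.
Proof.
rewrite cosD sinD; apply/eqP; rewrite eq_complex /=; apply/andP; split; apply/eqP.
  by [].
by rewrite addrC [sin s * _]mulrC.
Qed.

Lemma cisX (R : realType) (t : R) (k : nat) :
  (Complex (cos t) (sin t)) ^+ k = Complex (cos (t *+ k)) (sin (t *+ k)).
Proof.
elim: k => [|k IH]; first by rewrite expr0 mulr0n cos0 sin0; apply/eqP; rewrite eq_complex /= !eqxx.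
by rewrite exprS IH cisM -mulrS.
Qed.

Lemma xiE (R : realType) (n : nat) :
  xi R n = Complex (cos (2 * pi / n%:R)) (sin (2 * pi / n%:R)).
Proof. by []. Qed.

Lemma xiX (R : realType) (n k : nat) :
  xi R n ^+ k = Complex (cos ((2 * pi / n%:R) *+ k)) (sin ((2 * pi / n%:R) *+ k)).
Proof. by rewrite xiE cisX. Qed.

Lemma xin (R : realType) (n : nat) : (0 < n)%N -> xi R n ^+ n = 1.
Proof.
move=> n0; rewrite xiX -mulr_natr mulfVK ?pnatr_eq0 -?lt0n //.
by rewrite mulr_natl cos2pi sin2pi.
Qed.

Lemma xiJ (R : realType) (n : nat) : (xi R n * (xi R n)^*)%C = 1.
Proof.
rewrite xiE /=; apply/eqP; rewrite eq_complex /=; apply/andP; split; apply/eqP.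
  by rewrite mulrN opprK -!expr2 cos2Dsin2.
by rewrite mulrN mulrC addNr.
Qed.

Lemma cos_lt1 (R : realType) (t : R) : 0 < t < pi *+ 2 -> cos t < 1.
Proof.
move=> /andP[t0 t2].
have -> : t = t / 2 + t / 2 by field.
rewrite cosD -!expr2 cos2sin2.
have : 0 < sin (t / 2).
  apply: sin_gt0_pi; rewrite divr_gt0 //= ltr_pdivrMr // mulr_natr //.
by move=> h; have := mulr_gt0 h h; rewrite -expr2; lra.
Qed.

Lemma xiX_neq1 (R : realType) (n m : nat) : (0 < m < n)%N -> xi R n ^+ m != 1.
Proof.
move=> /andP[m0 mn]; rewrite xiX eq_complex negb_and; apply/orP; left; apply/eqP => /= c.
have n0 : (0 < n)%N by apply: leq_ltn_trans mn.
suff : cos ((2 * pi / n%:R) *+ m : R) < 1 by rewrite c ltxx.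
apply: cos_lt1; apply/andP; split.
  by rewrite pmulrn_lgt0 // divr_gt0 // ?mulr_gt0 ?pi_gt0 // ltr0n.
rewrite -mulr_natr mulrAC ltr_pdivrMr ?ltr0n // -mulr_natl mulrC.
have hp : 0 < pi :> R by exact: pi_gt0. have hm : m%:R < n%:R :> R by rewrite ltr_nat. rewrite mulr1 -mulr_natr; nra.
Qed.

Lemma sum_Dn (K : nmodType) n (G : Dn n -> K) :
  \sum_(x : Dn n) G x = \sum_(j < n) (G (true, j) + G (false, j)).
Proof.
rewrite big_split /= -(big_bool _ (fun e => \sum_(j < n) G (e, j))).
rewrite (@pair_bigA _ _ _ bool 'I_n (fun e j => G (e, j))) /=.
by apply: eq_bigr => -[e j].
Qed.

Lemma sum_ind (K : pzSemiRingType) (T : finType) (a : T) (F : T -> K) :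
  \sum_(u : T) (a == u)%:R * F u = F a.
Proof.
rewrite (bigD1 a) //= eqxx mul1r big1 ?addr0 // => u /negbTE.
by rewrite eq_sym => ->; rewrite mul0r.
Qed.

Definition Af (K : pzRingType) n (h : Dn n -> K) (z w : Dn n) : K :=
  \sum_(x : Dn n) h x * (dmul x w == z)%:R.

Lemma AmatE (K : pzRingType) n (h : Dn n -> K) k l :
  Amat h k l = Af h (enum_val k) (enum_val l).
Proof.
rewrite mxE /grmul /Af; apply: eq_bigr => x _.
rewrite (bigD1 (enum_val l)) //= big1 ?addr0.
  by rewrite /gbasis eqxx mulr1.
by move=> y /negbTE yl; rewrite /gbasis yl mulr0 mul0r.
Qed.

Lemma dmul_inj n (x : Dn n) : injective (dmul x).
Proof.
move=> [e1 j1] [e2 j2] E.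
have e12 : e1 = e2.
  by move: (congr1 fst E) => /=; clear E; case: (x.1); case: e1; case: e2.
rewrite -{}e12 in E *; congr (_, _); apply: val_inj => /=.
move: (congr1 (fun p => val p.2) E) => /= /eqP; rewrite eqn_modDl => /eqP.
by rewrite !modn_small.
Qed.

Lemma expVn_sub (F : fieldType) n (w : F) j :
  w ^+ n = 1 -> w != 0 -> (j <= n)%N -> w ^+ (n - j) = w^-1 ^+ j.
Proof.
move=> wn w0 jn; rewrite exprVn; apply: (mulIf (expf_neq0 j w0)).
by rewrite -exprD subnK // mulVf ?expf_neq0 // wn.
Qed.

Lemma dmul_pow (F : fieldType) n (w : F) (x y : Dn n) :
  w ^+ n = 1 -> w != 0 ->
  w ^+ (dmul x y).2 = (if y.1 then w^-1 ^+ x.2 else w ^+ x.2) * w ^+ y.2.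
Proof.
move=> wn w0; rewrite /dmul /= expr_mod // exprD.
by case: (y.1) => //; rewrite expVn_sub // ltnW.
Qed.

Lemma dmul_solve (K : pzSemiRingType) n (x y : Dn n) (F : Dn n -> K) :
  exists w0, dmul x w0 = y /\ \sum_(w : Dn n) (dmul x w == y)%:R * F w = F w0.
Proof.
have [g gK Kg] := injF_bij (@dmul_inj n x).
exists (g y); split; first exact: Kg.
rewrite (bigD1 (g y)) //= Kg eqxx mul1r big1 ?addr0 // => u uy.
case: eqP => [E|]; last by rewrite mul0r.
by move: uy; rewrite -E gK eqxx.
Qed.

Local Open Scope complex_scope.

Definition pa (R : realType) n (al0 al1 w : R[i]) (y : Dn n) : R[i] :=
  (if y.1 then al1 else al0) * w ^+ y.2.

Lemma AT_pa (R : realType) n (a b : 'I_n -> R) (al0 al1 w : R[i]) (z : Dn n) :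
  w ^+ n = 1 -> w != 0 ->
  \sum_(u : Dn n) (Af (hcoef a b) u z)%:C * pa al0 al1 w u =
  pa (al0 * peval a w + al1 * peval b w) (al0 * peval b w^-1 + al1 * peval a w^-1) w z.
Proof.
move=> wn w0.
under eq_bigr do rewrite /Af rmorph_sum mulr_suml.
rewrite exchange_big /=.
under eq_bigr => x _ do (under eq_bigr => u _ do rewrite rmorphM rmorph_nat -mulrA; rewrite -mulr_sumr sum_ind).
rewrite sum_Dn /pa /peval.
under eq_bigr => j _ do rewrite !dmul_pow //=.
case: z => [e2 j2] /=.
by case: e2; rewrite /hcoef /= !mulr_sumr -big_split /= mulr_suml; apply: eq_bigr => j _; ring.
Qed.

Lemma pa_solve (R : realType) n (al0 al1 w : R[i]) (x z w0 : Dn n) :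
  w ^+ n = 1 -> w != 0 -> dmul x w0 = z ->
  pa al0 al1 w w0 = (if xorb x.1 z.1 then al1 else al0) *
     ((if xorb x.1 z.1 then w ^+ x.2 else w^-1 ^+ x.2) * w ^+ z.2).
Proof.
move=> wn w0n E.
have e : w0.1 = xorb x.1 z.1.
  by rewrite -E /=; case: (x.1); case: (w0.1).
have p : w ^+ z.2 = (if w0.1 then w^-1 ^+ x.2 else w ^+ x.2) * w ^+ w0.2.
  by rewrite -E dmul_pow.
by rewrite /pa p -e; case: (w0.1) => /=; congr (_ * _); rewrite mulrA -exprMn ?mulfV ?mulVf // expr1n mul1r.
Qed.

Lemma A_pa (R : realType) n (a b : 'I_n -> R) (al0 al1 w : R[i]) (z : Dn n) :
  w ^+ n = 1 -> w != 0 ->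
  \sum_(u : Dn n) (Af (hcoef a b) z u)%:C * pa al0 al1 w u =
  pa (al0 * peval a w^-1 + al1 * peval b w) (al1 * peval a w + al0 * peval b w^-1) w z.
Proof.
move=> wn w0.
under eq_bigr do rewrite /Af rmorph_sum mulr_suml.
rewrite exchange_big /=.
have H : forall x : Dn n, \sum_(u : Dn n) (hcoef a b x * (dmul x u == z)%:R)%:C * pa al0 al1 w u
   = (hcoef a b x)%:C * ((if xorb x.1 z.1 then al1 else al0) *
     ((if xorb x.1 z.1 then w ^+ x.2 else w^-1 ^+ x.2) * w ^+ z.2)).
  move=> x; have [w1 [E S]] := dmul_solve x z (pa al0 al1 w).
  under eq_bigr => u _ do rewrite rmorphM rmorph_nat -mulrA.
  by rewrite -mulr_sumr S (pa_solve _ _ wn w0 E).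
under eq_bigr do rewrite H.
rewrite sum_Dn /pa /peval.
clear H; case: z => [e2 j2] /=.
by case: e2; rewrite /hcoef /= !mulr_sumr -big_split /= mulr_suml; apply: eq_bigr => j _; ring.
Qed.

Local Close Scope complex_scope.

Lemma cj (R : realType) (u : R[i]) : u^* = (u^*)%C.
Proof. by []. Qed.

Lemma normcC (R : realType) (z : R[i]) : `|z| = ((Normc.normc z)%:C)%C.
Proof. by case: z => x y; rewrite normc_def. Qed.

Definition theta (R : realType) (z : R[i]) : R[i] := if z == 0 then 1 else z / `|z|.

Lemma thetaN (R : realType) (z : R[i]) : theta z * `|z| = z.
Proof.
rewrite /theta; case: eqP => [->|/eqP z0]; first by rewrite normr0 mulr0.
by rewrite mulfVK // normr_eq0.
Qed.

Lemma thetaJ (R : realType) (z : R[i]) : theta z * z^* = `|z|.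
Proof.
rewrite /theta; case: eqP => [->|/eqP z0]; first by rewrite normr0 mul1r conjC0.
have nz : `|z| != 0 by rewrite normr_eq0.
by rewrite mulrAC -normCK expr2 mulfK.
Qed.

Lemma thetaU (R : realType) (z : R[i]) : (theta z)^* * theta z = 1.
Proof.
rewrite -normCKC /theta; case: eqP => [_|/eqP z0]; first by rewrite normr1 expr1n.
have nz : `|z| != 0 by rewrite normr_eq0.
by rewrite normf_div normr_id divff // expr1n.
Qed.

Lemma peval_conj (R : realType) n (a : 'I_n -> R) (w : R[i]) :
  (peval a w)^* = peval a (w^*).
Proof.
rewrite /peval rmorph_sum; apply: eq_bigr => j _.
by rewrite rmorphM rmorphXn /= cj conjc_real.
Qed.

Lemma eigen_scalar (R : realType) (f1 f2 g1 g2 : R[i]) (s : bool) :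
  f2 = f1^* -> g2 = g1^* ->
  let t := (if s then -1 else 1) * theta (f1 * g2) in
  let lam := (`|f1| + (if s then -1 else 1) * `|g1|) ^+ 2 in
  (1 * f1 + t * g1) * f2 + (1 * g2 + t * f2) * g1 = lam /\
  (1 * g2 + t * f2) * f1 + (1 * f1 + t * g1) * g2 = lam * t.
Proof.
move=> E2 F2; cbv zeta.
have Hf : f1 * f2 = `|f1| ^+ 2 by rewrite normCK E2.
have Hg : g1 * g2 = `|g1| ^+ 2 by rewrite normCK F2.
have Hp : theta (f1 * g2) * (f2 * g1) = `|f1| * `|g1|.
  by rewrite E2 -[g1]conjCK -F2 -rmorphM /= thetaJ normrM norm_conjC F2 norm_conjC.
have Hq : theta (f1 * g2) * (`|f1| * `|g1|) = f1 * g2.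
  by rewrite -[`|g1|]norm_conjC -F2 -normrM thetaN.
set th := theta _.
split; apply/eqP; rewrite -subr_eq0; case: s.
- have -> : (1 * f1 + -1 * th * g1) * f2 + (1 * g2 + -1 * th * f2) * g1 -
      (`|f1| + -1 * `|g1|) ^+ 2 =
    (f1 * f2 - `|f1| ^+ 2) + (g1 * g2 - `|g1| ^+ 2) - 2 * (th * (f2 * g1) - `|f1| * `|g1|) by ring.
  by rewrite Hf Hg Hp !subrr mulr0 !addr0 subr0.
- have -> : (1 * f1 + 1 * th * g1) * f2 + (1 * g2 + 1 * th * f2) * g1 -
      (`|f1| + 1 * `|g1|) ^+ 2 =
    (f1 * f2 - `|f1| ^+ 2) + (g1 * g2 - `|g1| ^+ 2) + 2 * (th * (f2 * g1) - `|f1| * `|g1|) by ring.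
  by rewrite Hf Hg Hp !subrr mulr0 !addr0.
- have -> : (1 * g2 + -1 * th * f2) * f1 + (1 * f1 + -1 * th * g1) * g2 -
      (`|f1| + -1 * `|g1|) ^+ 2 * (-1 * th) =
    th * ((f1 * f2 - `|f1| ^+ 2) + (g1 * g2 - `|g1| ^+ 2)) * (-1) - 2 * (th * (`|f1| * `|g1|) - f1 * g2) by ring.
  by rewrite Hf Hg Hq !subrr addr0 !mulr0 mul0r subr0.
- have -> : (1 * g2 + 1 * th * f2) * f1 + (1 * f1 + 1 * th * g1) * g2 -
      (`|f1| + 1 * `|g1|) ^+ 2 * (1 * th) =
    th * ((f1 * f2 - `|f1| ^+ 2) + (g1 * g2 - `|g1| ^+ 2)) - 2 * (th * (`|f1| * `|g1|) - f1 * g2) by ring.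
  by rewrite Hf Hg Hq !subrr addr0 !mulr0 subr0.
Qed.

Lemma sum_enumv (K : nmodType) (T : finType) (F : T -> K) :
  \sum_(k < #|T|) F (enum_val k) = \sum_(x : T) F x.
Proof. by rewrite -big_enum_val. Qed.

Lemma conjCX (R : realType) (x : R[i]) k : (x ^+ k)^* = (x^*) ^+ k.
Proof. exact: rmorphXn. Qed.

Definition om (R : realType) n (i : 'I_n) : R[i] := xi R n ^+ i.

Lemma omn (R : realType) n (i : 'I_n) : om R i ^+ n = 1.
Proof. by rewrite /om exprAC xin ?expr1n // (ord_n_gt0 i). Qed.

Lemma omJ (R : realType) n (i : 'I_n) : om R i * (om R i)^* = 1.
Proof. by rewrite /om conjCX -exprMn cj xiJ expr1n. Qed.

Lemma om_neq0 (R : realType) n (i : 'I_n) : om R i != 0.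
Proof. by apply/eqP => E; move: (omJ R i); rewrite E mul0r => /eqP; rewrite eq_sym oner_eq0. Qed.

Lemma omV (R : realType) n (i : 'I_n) : (om R i)^-1 = (om R i)^*.
Proof.
by rewrite -[RHS]mul1r -(mulVf (om_neq0 R i)) -mulrA omJ mulr1.
Qed.

Definition sg (R : pzRingType) (s : bool) : R := if s then -1 else 1.

Definition pv (R : realType) n (a b : 'I_n -> R) (c : Dn n) : Dn n -> R[i] :=
  pa 1 (sg _ c.1 * theta (peval a (om R c.2) * peval b (om R c.2)^-1)) (om R c.2).

Definition lam (R : realType) n (a b : 'I_n -> R) (c : Dn n) : R :=
  (absev a c.2 + sg _ c.1 * absev b c.2) ^+ 2.

Definition Pm (R : realType) n (a b : 'I_n -> R) : 'M[R[i]]_#|Dn n| :=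
  \matrix_(k, l) pv a b (enum_val l) (enum_val k).

Definition Dm (R : realType) n (a b : 'I_n -> R) : 'M[R[i]]_#|Dn n| :=
  diag_mx (\row_l ((lam a b (enum_val l))%:C)%C).

Lemma pv_eigen (R : realType) n (a b : 'I_n -> R) (c z : Dn n) :
  \sum_(u : Dn n) (Af (hcoef a b) z u)%:C%C *
     \sum_(v : Dn n) (Af (hcoef a b) v u)%:C%C * pv a b c v
  = pv a b c z * (lam a b c)%:C%C.
Proof.
rewrite /pv; set w := om R c.2; set t := _ * theta _.
have wn : w ^+ n = 1 by apply: omn.
have w0 : w != 0 by apply: om_neq0.
under eq_bigr do rewrite AT_pa //.
rewrite A_pa //.
have E2 : peval a w^-1 = (peval a w)^* by rewrite peval_conj omV.
have F2 : peval b w^-1 = (peval b w)^* by rewrite peval_conj omV.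
have [H1 H2] := eigen_scalar c.1 E2 F2.
rewrite /t /sg H1 H2 /pa /lam /sg.
have -> : ((absev a c.2 + (if c.1 then -1 else 1) * absev b c.2) ^+ 2)%:C%C =
   (`|peval a w| + (if c.1 then -1 else 1) * `|peval b w|) ^+ 2.
  by rewrite rmorphXn rmorphD rmorphM /= !normcC /absev; case: (c.1) => /=; rewrite ?rmorphN rmorph1.
by case: (z.1); ring.
Qed.

Lemma grmulE (K : pzRingType) n (h : Dn n -> K) (g z : Dn n) :
  grmul h (gbasis K g) z = Af h z g.
Proof.
rewrite /grmul /Af; apply: eq_bigr => x _.
rewrite (bigD1 g) //= big1 ?addr0.
  by rewrite /gbasis eqxx mulr1.
by move=> y /negbTE yl; rewrite /gbasis yl mulr0 mul0r.
Qed.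

Lemma MP_PD (R : realType) n (a b : 'I_n -> R) :
  let h := hcoef a b in
  map_mx (real_complex R) (Amat h *m (Amat h)^T) *m Pm a b = Pm a b *m Dm a b.
Proof.
move=> h; apply/matrixP => k l.
rewrite map_mxM -map_trmx -mulmxA mul_mx_diag !mxE.
under eq_bigr => q _ do rewrite !mxE.
under eq_bigr => q _ do under eq_bigr => m _ do rewrite !mxE.
under eq_bigr => q _ do under eq_bigr => m _ do rewrite !grmulE.
under eq_bigr => q _ do rewrite grmulE.
rewrite (sum_enumv (fun u => (Af h (enum_val k) u)%:C%C *
     \sum_(j < #|Dn n|) (Af h (enum_val j) u)%:C%C * pv a b (enum_val l) (enum_val j))).
under eq_bigr => u _ do rewrite (sum_enumv (fun v => (Af h v u)%:C%C * pv a b (enum_val l) v)).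
by rewrite pv_eigen.
Qed.

Lemma xi_neq0 (R : realType) n : xi R n != 0.
Proof. by apply/eqP => E; move: (xiJ R n); rewrite E mul0r => /eqP; rewrite eq_sym oner_eq0. Qed.

Lemma xi_lt (R : realType) n (i j : nat) : (i < j)%N -> (j < n)%N ->
  xi R n ^+ i <> xi R n ^+ j.
Proof.
move=> ij jn E.
have : xi R n ^+ (j - i) == 1.
  apply/eqP; apply: (mulfI (expf_neq0 i (xi_neq0 R n))).
  by rewrite -exprD (subnKC (ltnW ij)) mulr1 E.
apply/negP/xiX_neq1; rewrite subn_gt0 ij /=.
by apply: leq_ltn_trans jn; apply: leq_subr.
Qed.

Lemma xi_inj (R : realType) n (i j : nat) : (i < n)%N -> (j < n)%N ->
  xi R n ^+ i = xi R n ^+ j -> i = j.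
Proof.
move=> in_ jn E; case: (ltngtP i j) => // [ij|ji].
  by case: (xi_lt ij jn E).
by case: (xi_lt ji in_ (esym E)).
Qed.

Lemma geo0 (F : fieldType) n (z : F) : z ^+ n = 1 -> z != 1 -> \sum_(j < n) z ^+ j = 0.
Proof.
move=> zn z1; have := subrX1 z n; rewrite zn subrr => /esym /eqP.
by rewrite mulf_eq0 subr_eq0 (negbTE z1) => /eqP.
Qed.

Lemma conjCM (R : realType) (x y : R[i]) : (x * y)^* = x^* * y^*.
Proof. exact: rmorphM. Qed.

Lemma conj_sg (R : realType) s (x : R[i]) : (sg _ s * x)^* = sg _ s * x^*.
Proof. by rewrite conjCM /sg; case: s; rewrite ?conjCN1 ?conjC1. Qed.

Lemma pv_orth (R : realType) n (a b : 'I_n -> R) (c d : Dn n) :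
  \sum_(u : Dn n) (pv a b c u)^* * pv a b d u = (c == d)%:R * (2 * n)%:R.
Proof.
rewrite sum_Dn /pv /pa /=.
set tc := _ * theta _; set td := _ * theta _.
have T : forall j : 'I_n, (tc * om R c.2 ^+ j)^* * (td * om R d.2 ^+ j) +
      (1 * om R c.2 ^+ j)^* * (1 * om R d.2 ^+ j) =
    (tc^* * td + 1) * (((om R c.2)^* * om R d.2) ^+ j).
  by move=> j; rewrite !conjCM conjCX conjC1 exprMn; ring.
under eq_bigr => j _ do rewrite T.
rewrite -big_distrr /= /tc /td; clear T tc td.
case: (eqVneq c.2 d.2) => [E|E].
- have -> : (om R c.2)^* * om R d.2 = 1 by rewrite -E mulrC omJ.
  under eq_bigr do rewrite expr1n.
  rewrite sumr_const card_ord -E conj_sg mulrACA thetaU mulr1.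
  case: c d E => [[] ci] [[] di] /= E; rewrite /sg ?E ?eqxx /= natrM; ring.
- rewrite geo0 ?mulr0.
  + have -> : c == d = false by apply/negbTE; apply: contra E => /eqP ->.
    by rewrite mul0r.
  + by rewrite exprMn -conjCX !omn conjC1 mulr1.
  apply: contra E => /eqP E; apply/eqP.
  have : om R c.2 = om R d.2.
    by rewrite -[LHS]mulr1 -E mulrA omJ mul1r.
  by move/xi_inj => /(_ (ltn_ord _) (ltn_ord _)) H; apply: val_inj.
Qed.

Lemma char_poly_sim (F : comUnitRingType) m (M Pp Qq : 'M[F]_m) :
  Qq *m Pp = 1%:M -> char_poly (Qq *m M *m Pp) = char_poly M.
Proof.
move=> QP; rewrite /char_poly /char_poly_mx.
have mQP : map_mx polyC Qq *m map_mx polyC Pp = 1%:M by rewrite -map_mxM QP map_scalar_mx.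
have -> : 'X%:M - map_mx polyC (Qq *m M *m Pp) =
   map_mx polyC Qq *m ('X%:M - map_mx polyC M) *m map_mx polyC Pp.
  rewrite mulmxBr mulmxBl !map_mxM -!mulmxA; congr (_ - _).
  by rewrite -scalar_mxC mulmxA mQP mul1mx.
have dQP : \det (map_mx polyC Qq) * \det (map_mx polyC Pp) = 1 by rewrite -det_mulmx mQP det1.
by rewrite !det_mulmx mulrAC dQP mul1r.
Qed.

Lemma QP (R : realType) n (a b : 'I_n -> R) : (0 < n)%N ->
  ((2 * n)%:R^-1 *: (map_mx Num.conj (Pm a b))^T) *m Pm a b = 1%:M.
Proof.
move=> n0; apply/matrixP => k l; rewrite !mxE.
under eq_bigr do rewrite !mxE.
rewrite (sum_enumv (fun u => (2 * n)%:R^-1 * (pv a b (enum_val k) u)^* * pv a b (enum_val l) u)).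
under eq_bigr do rewrite -mulrA.
rewrite -mulr_sumr pv_orth mulrCA mulVf ?pnatr_eq0 -?lt0n ?muln_gt0 //= mulr1.
by rewrite (inj_eq enum_val_inj).
Qed.

Lemma prod_Dn (K : comPzSemiRingType) n (G : Dn n -> K) :
  \prod_(x : Dn n) G x = \prod_(j < n) (G (true, j) * G (false, j)).
Proof.
rewrite big_split /= -(big_bool _ (fun e => \prod_(j < n) G (e, j))).
rewrite (@pair_bigA _ _ _ bool 'I_n (fun e j => G (e, j))) /=.
by apply: eq_bigr => -[e j].
Qed.

Lemma prod_enumv (K : comPzSemiRingType) (T : finType) (F : T -> K) :
  \prod_(k < #|T|) F (enum_val k) = \prod_(x : T) F x.
Proof. by rewrite -big_enum_val. Qed.

Lemma charMc (R : realType) n (a b : 'I_n -> R) : (0 < n)%N ->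
  let h := hcoef a b in
  char_poly (map_mx (real_complex R) (Amat h *m (Amat h)^T)) =
  \prod_(j < n) (('X - ((lam a b (true, j))%:C%C)%:P) * ('X - ((lam a b (false, j))%:C%C)%:P)).
Proof.
move=> n0 h.
pose Qm := ((2 * n)%:R^-1 *: (map_mx Num.conj (Pm a b))^T).
have QPm : Qm *m Pm a b = 1%:M by apply: QP.
have E : Qm *m map_mx (real_complex R) (Amat h *m (Amat h)^T) *m Pm a b = Dm a b.
  by rewrite -mulmxA MP_PD mulmxA QPm mul1mx.
rewrite -(char_poly_sim _ QPm) E char_poly_trig ?diag_mx_is_trig //.
under eq_bigr do rewrite mxE eqxx mulr1n mxE.
rewrite (prod_enumv (fun c => 'X - ((lam a b c)%:C%C)%:P)).
by rewrite prod_Dn.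
Qed.

Unset Implicit Arguments.
Unset Strict Implicit.

Lemma absev_ge0 (R : realType) n (a : 'I_n -> R) i : 0 <= absev a i.
Proof. by rewrite /absev /Normc.normc; case: (peval _ _) => x y; exact: sqrtr_ge0. Qed.

Theorem lemma2 (R : realType) (n : nat) (a b : 'I_n -> R) :
  (0 < n)%N ->
  let h := hcoef a b in
  let M := Amat h *m (Amat h)^T in
  char_poly M =
    \prod_(i < n)
      (('X - ((absev a i + absev b i) ^+ 2)%:P) *
       ('X - ((absev a i - absev b i) ^+ 2)%:P))
  /\ mat_norm h <= \big[Num.max/0]_(i < n) (absev a i + absev b i).
Proof.
move=> n0 h M.
have C1 : char_poly M = \prod_(i < n)
      (('X - ((absev a i + absev b i) ^+ 2)%:P) *
       ('X - ((absev a i - absev b i) ^+ 2)%:P)).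
  apply: (@map_poly_inj _ _ (real_complex R)).
  rewrite map_char_poly charMc // rmorph_prod; apply: eq_bigr => j _.
  rewrite [RHS]rmorphM /= !map_polyXsubC /lam /sg /= mulN1r mul1r mulrC.
  by rewrite !rmorphXn /= !rmorphD /= rmorphN.
split => //.
have m0 : 0 <= \big[Num.max/0]_(i < n) (absev a i + absev b i) by apply: bigmax_ge_id.
have Fi : forall i : 'I_n, absev a i + absev b i <= \big[Num.max/0]_(i < n) (absev a i + absev b i).
  by move=> i; rewrite (bigD1 i) //= le_max lexx.
set m := \big[Num.max/0]_(i < n) (absev a i + absev b i) in m0 Fi *.
have Sub : forall x, eigenvalue M x -> x <= m ^+ 2.
  move=> x; rewrite eigenvalue_root_char C1 /root horner_prod => /prodf_eq0 [i _].
  rewrite hornerM !hornerXsubC.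
  have := Fi i; have := @absev_ge0 R n a i; have := @absev_ge0 R n b i.
  move: (absev a i) (absev b i) m0 => A B m0' HB HA HF.
  have H1 : 0 <= (m - (A + B)) * (m + (A + B)) by apply: mulr_ge0; lra.
  have H2 : 0 <= (m - (A + B)) * (m + (A + B)) + 4%:R * A * B by rewrite addr_ge0 // !mulr_ge0.
  rewrite mulf_eq0 !subr_eq0 => /orP[] /eqP ->.
    by rewrite -subr_ge0; move: H1; congr (0 <= _); ring.
  by rewrite -subr_ge0; move: H2; congr (0 <= _); ring.
have ne : ([set x | eigenvalue M x] !=set0)%classic.
  exists ((absev a (Ordinal n0) + absev b (Ordinal n0)) ^+ 2) => /=.
  rewrite eigenvalue_root_char C1 /root horner_prod.
  by apply/prodf_eq0; exists (Ordinal n0) => //; rewrite hornerM !hornerXsubC subrr mul0r.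
rewrite /mat_norm -/M.
apply: le_trans (ler_wsqrtr (ge_sup ne Sub)) _.
by rewrite sqrtr_sqr ger0_norm.
Qed.
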